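(* Let $(A_\gamma)_{\gamma\in\Gamma}$ be a nonempty family of nontrivial commutative groups, let $S_\gamma\subseteq A_\gamma$ generate $A_\gamma$, let $A=\bigoplus_\gamma A_\gamma$ (each $A_\gamma$ viewed as a subgroup of $A$), and let $B$ be a commutative group. For $f\in B^A$ and $d\in\mathbb N$, the following are equivalent: (i) there exist $r\in\mathbb N$, indices $\gamma_1,\dots,\gamma_r\in\Gamma$, positive integers $d_1,\dots,d_r$ with $d_1+\dots+d_r=d$, and elements $a_{i,j}\in S_{\gamma_i}$ ($1\le i\le r$, $1\le j\le d_i$) such that $\big(\prod_{i=1}^r\prod_{j=1}^{d_i}\Delta_{a_{i,j}}\big)f\ne0$; (ii) $\operatorname{fdeg}(f)\ge d$.
   Context: For commutative groups $A,B$, $B^A$ denotes the commutative group (under pointwise addition) of all maps $A\to B$. For $a\in A$, the difference operator $\Delta_a:B^A\to B^A$ is $(\Delta_a f)(x)=f(x+a)-f(x)$; the empty product of such operators is the identity. Let $\widetilde{\mathbb N}=\mathbb N\cup\{-\infty,\infty\}$ ($\mathbb N=\{0,1,2,\dots\}$), totally ordered with $-\infty$ least and $\infty$ greatest. The functional degree $\operatorname{fdeg}(f)\in\widetilde{\mathbb N}$ of $f\in B^A$ is: $-\infty$ if $f=0$; otherwise the least $n\in\mathbb N$ such that $\Delta_{a_1}\cdots\Delta_{a_{n+1}}f=0$ for all $a_1,\dots,a_{n+1}\in A$; and $\infty$ if no such $n$ exists. *)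

(* Defs.v *)
From HB Require Import structures.
From mathcomp Require Import all_boot all_algebra.
From mathcomp Require Import boolp.
From Stdlib Require List.
Set Implicit Arguments. Unset Strict Implicit. Unset Printing Implicit Defensive.
Import GRing.Theory.
Local Open Scope ring_scope.

Definition Delta (A B : zmodType) (a : A) (f : A -> B) : A -> B :=
  fun x => f (x + a) - f x.

Definition Deltas (A B : zmodType) (s : seq A) (f : A -> B) : A -> B :=
  foldr (@Delta A B) f s.

Inductive ntilde := NMinf | NFin of nat | NPinf.

Definition ntilde_le (x y : ntilde) : bool :=
  match x, y with
  | NMinf, _ => true
  | _, NPinf => true
  | NFin m, NFin n => (m <= n)%N
  | _, _ => false
  end.

Definition killed (A B : zmodType) (n : nat) (f : A -> B) : Prop :=
  forall s : seq A, size s = n -> Deltas s f = (fun _ => 0).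

Definition fdeg (A B : zmodType) (f : A -> B) : ntilde :=
  match pselect (f = (fun _ => 0)) with
  | left _ => NMinf
  | right _ =>
    match pselect (exists n, `[< killed n.+1 f >]) with
    | left ex => NFin (ex_minn ex)
    | right _ => NPinf
    end
  end.

Section DirectSum.
Variables (Gam : Type) (A : Gam -> zmodType).

Definition finsupp (g : forall i, A i) : Prop :=
  exists s : list Gam, forall i, g i <> 0 -> List.In i s.

Definition dsum := {g : forall i, A i | finsupp g}.

HB.instance Definition _ := gen_eqMixin dsum.
HB.instance Definition _ := gen_choiceMixin dsum.


Lemma finsupp0 : finsupp (fun i => 0).
Proof. by exists nil => i; case. Qed.

Lemma finsuppN (g : forall i, A i) : finsupp g -> finsupp (fun i => - g i).
Proof.
case=> s hs; exists s => i hi; apply: hs => gi0; apply: hi; by rewrite gi0 oppr0.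
Qed.

Lemma finsuppD (g h : forall i, A i) :
  finsupp g -> finsupp h -> finsupp (fun i => g i + h i).
Proof.
case=> s hs [t ht]; exists (s ++ t)%list => i hi; apply List.in_or_app.
have [gi0|gi0] := eqVneq (g i) 0.
- right; apply: ht => hi0; apply: hi; by rewrite gi0 hi0 addr0.
- by left; apply: hs; apply/eqP.
Qed.

Definition dzero : dsum := exist _ _ finsupp0.
Definition dopp (x : dsum) : dsum := exist _ _ (finsuppN (proj2_sig x)).
Definition dadd (x y : dsum) : dsum :=
  exist _ _ (finsuppD (proj2_sig x) (proj2_sig y)).

Lemma dsum_ext (x y : dsum) : (forall i, proj1_sig x i = proj1_sig y i) -> x = y.
Proof.
case: x y => g hg [h hh] /= e.
have eg : g = h by apply: functional_extensionality_dep.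
subst h; congr exist; exact: Prop_irrelevance.
Qed.

Lemma daddA : associative dadd.
Proof. by move=> x y z; apply: dsum_ext => i /=; rewrite addrA. Qed.
Lemma daddC : commutative dadd.
Proof. by move=> x y; apply: dsum_ext => i /=; rewrite addrC. Qed.
Lemma dadd0 : left_id dzero dadd.
Proof. by move=> x; apply: dsum_ext => i /=; rewrite add0r. Qed.
Lemma daddN : left_inverse dzero dopp dadd.
Proof. by move=> x; apply: dsum_ext => i /=; rewrite addNr. Qed.

HB.instance Definition _ :=
  GRing.isZmodule.Build dsum daddA daddC dadd0 daddN.

Definition coord (x : dsum) (i : Gam) : A i := proj1_sig x i.

(* x lies in the copy of S_gamma inside A = (+)_i A_i :
   x is the image of an element of S_gamma under the canonical embedding. *)
Definition in_comp (gam : Gam) (S : A gam -> Prop) (x : dsum) : Prop :=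
  S (coord x gam) /\ forall i, i <> gam -> coord x i = 0.

End DirectSum.

Definition generates (G : zmodType) (S : G -> Prop) : Prop :=
  forall a : G, exists s : seq (int * G),
    (forall p, p \in s -> S p.2) /\ a = \sum_(p <- s) p.2 *~ p.1.

(* Main.v *)
Require Import Defs.
From HB Require Import structures.
From mathcomp Require Import all_boot all_algebra.
From mathcomp Require Import boolp.
Import GRing.Theory.
Local Open Scope ring_scope.
Set Implicit Arguments. Unset Strict Implicit.

Section Gen.
Variables (A B : zmodType).

Lemma Delta_comm (a b : A) (h : A -> B) :
  Delta a (Delta b h) = Delta b (Delta a h).
Proof.
apply: functional_extensionality_dep => x; rewrite /Delta (addrAC x a b).
move: (h (x+b+a)) (h (x+a)) (h (x+b)) (h x) => p q r t.
by rewrite !opprB !addrA (addrAC p (-q)) (addrAC _ (-q)) (addrAC _ t (-r)).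
Qed.

Lemma Deltas_cat_cons (pre post : seq A) a (f : A -> B) :
  Deltas (pre ++ a :: post) f = Delta a (Deltas (pre ++ post) f).
Proof. by elim: pre => //= c pre ->; rewrite Delta_comm. Qed.

Lemma Deltas0 (s : seq A) : Deltas s (fun _ : A => 0 : B) = (fun _ => 0).
Proof.
elim: s => //= a s ->; apply: functional_extensionality_dep => x.
by rewrite /Delta subrr.
Qed.

Definition per (g : A -> B) (a : A) := forall x, g (x + a) = g x.

Lemma Delta_eq0 (g : A -> B) a : per g a -> Delta a g = (fun _ => 0).
Proof.
by move=> h; apply: functional_extensionality_dep => x; rewrite /Delta h subrr.
Qed.

Lemma Delta_eq0P (g : A -> B) a : Delta a g = (fun _ => 0) -> per g a.
Proof.
move=> h x; have := congr1 (fun F => F x) h; rewrite /Delta /=.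
by move/eqP; rewrite subr_eq0 => /eqP.
Qed.

Lemma per0 g : per g 0. Proof. by move=> x; rewrite addr0. Qed.
Lemma perD g a b : per g a -> per g b -> per g (a + b).
Proof. by move=> ha hb x; rewrite addrA hb ha. Qed.
Lemma perN g a : per g a -> per g (- a).
Proof. by move=> ha x; rewrite -{2}(subrK a x) ha. Qed.

Lemma killed_mono (f : A -> B) n m : killed n f -> (n <= m)%N -> killed m f.
Proof.
move=> hk /subnK <-; elim: (m - n)%N => [|k IH] s.
  by rewrite add0n; apply: hk.
case: s => //= a s [/IH ->]; apply: functional_extensionality_dep => x.
by rewrite /Delta subrr.
Qed.

Lemma replace (S' : A -> Prop)
  (gen : forall g : A -> B, (forall b, S' b -> per g b) -> forall a, per g a)
  (f : A -> B) d :
  (forall s, size s = d -> (forall b, b \in s -> S' b) ->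
     Deltas s f = (fun _ => 0)) -> killed d f.
Proof.
move=> h0.
suff H : forall k pre post, size pre = k -> (size pre + size post)%N = d ->
   (forall b, b \in post -> S' b) -> Deltas (pre ++ post) f = (fun _ => 0).
  by move=> s hs; rewrite -(cats0 s); apply: (H d) => //; rewrite addn0.
elim=> [|k IH] pre post.
  by move/size0nil => -> /= hs hp; apply: h0.
case/lastP: pre => [//|pre a]; rewrite size_rcons => -[hk] hs hp.
rewrite cat_rcons Deltas_cat_cons; apply: Delta_eq0; apply: gen => b hb.
apply: Delta_eq0P; rewrite -Deltas_cat_cons; apply: IH => //.
  by rewrite /= addnS -hs addSn.
by move=> c; rewrite in_cons => /orP [/eqP ->|]; [| apply: hp].
Qed.

End Gen.

Notation dcoord := Defs.coord.
Section Emb.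
Variables (Gam : Type) (A : Gam -> zmodType).

Definition emb_fun (g : Gam) (v : A g) : forall i, A i :=
  fun i => match pselect (g = i) with
           | left e => eq_rect g (fun j => A j : Type) v i e
           | right _ => 0 end.

Lemma emb_finsupp g v : finsupp (@emb_fun g v).
Proof.
exists (g :: nil) => i; rewrite /emb_fun; case: pselect => [e _|//].
by left.
Qed.

Definition emb g v : dsum A := exist _ _ (@emb_finsupp g v).
Arguments emb [g] v.

Lemma coord_emb_eq g v : dcoord (@emb g v) g = v.
Proof.
rewrite /Defs.coord /= /emb_fun; case: pselect => [e|n]; last by case: n.
by rewrite (Prop_irrelevance e erefl).
Qed.

Lemma coord_emb_neq g v i : g <> i -> dcoord (@emb g v) i = 0.
Proof. by move=> n; rewrite /Defs.coord /= /emb_fun; case: pselect. Qed.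

Lemma coordD (x y : dsum A) i : dcoord (x + y) i = dcoord x i + dcoord y i.
Proof. by []. Qed.
Lemma coordN (x : dsum A) i : dcoord (- x) i = - dcoord x i.
Proof. by []. Qed.
Lemma coord0 i : dcoord (0 : dsum A) i = 0.
Proof. by []. Qed.

Lemma embD g (u v : A g) : emb (u + v) = emb u + emb v.
Proof.
apply: dsum_ext => i; change (dcoord (emb (u+v)) i = dcoord (emb u + emb v) i).
rewrite coordD /Defs.coord /=.
by rewrite /emb_fun; case: pselect => [e|_]; [case: i / e|rewrite addr0].
Qed.

Lemma emb0 g : emb (0 : A g) = 0.
Proof.
apply: dsum_ext => i; rewrite /= /emb_fun.
by case: pselect => [e|_] //; case: i / e.
Qed.

Lemma embN g (u : A g) : emb (- u) = - emb u.
Proof. by apply/eqP; rewrite -subr_eq0 opprK -embD addNr emb0. Qed.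

Lemma embMn g (u : A g) n : emb (u *+ n) = emb u *+ n.
Proof. by elim: n => [|n IH]; rewrite ?mulr0n ?emb0 // !mulrS embD IH. Qed.

Lemma embMz g (u : A g) z : emb (u *~ z) = emb u *~ z.
Proof.
case: z => n; first by rewrite -!pmulrn embMn.
by rewrite NegzE !mulrNz embN -!pmulrn embMn.
Qed.

Unset Implicit Arguments.
Variables (B : zmodType) (S : forall i, A i -> Prop)
  (S_gen : forall i, generates (S i)).

Lemma gen_dsum (g : dsum A -> B) :
  (forall b, (exists gm, in_comp (S gm) b) -> per g b) -> forall a, per g a.
Proof.
move=> hS x; case: (proj2_sig x) => s.
elim: s x => [|gm s IH] x hs.
  have -> : x = 0; last exact: per0.
  apply: dsum_ext => i; case: (pselect (proj1_sig x i = 0)) => // /hs [].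
have -> : x = emb (dcoord x gm) + (x - emb (dcoord x gm)) by rewrite addrC subrK.
apply: perD; last first.
  apply: IH => i; rewrite -[proj1_sig _ i]/(dcoord _ i) coordD coordN.
  case: (pselect (gm = i)) => [<-|ne]; first by rewrite coord_emb_eq subrr.
  rewrite coord_emb_neq // subr0 => /hs [e|//]; by case: ne.
have [l [hl ->]] := S_gen gm (dcoord x gm).
elim: l hl => [|p l IHl] hl; first by rewrite big_nil emb0; exact: per0.
rewrite big_cons embD; apply: perD; last by apply: IHl => q hq; apply: hl;
  rewrite in_cons hq orbT.
rewrite embMz.
have hp : per g (emb p.2).
  apply: hS; exists gm; split; first by rewrite coord_emb_eq; apply: hl;
    rewrite in_cons eqxx.
  by move=> i ne; apply: coord_emb_neq => e; apply: ne.
case: p.1 => n; first by rewrite -pmulrn; elim: n => [|n IHn];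
  [rewrite mulr0n; exact: per0 | rewrite mulrS; exact: perD].
rewrite NegzE mulrNz -pmulrn; apply: perN; elim: n.+1 => [|k IHk];
  [rewrite mulr0n; exact: per0 | rewrite mulrS; exact: perD].
Qed.

End Emb.

Theorem lemma3 (Gam : Type) (A : Gam -> zmodType)
  (Gam_ne : inhabited Gam)
  (A_nontriv : forall i, exists a : A i, a <> 0)
  (S : forall i, A i -> Prop)
  (S_gen : forall i, generates (S i))
  (B : zmodType) (f : dsum A -> B) (d : nat) :
  (exists (r : nat) (gam : nat -> Gam) (dd : nat -> nat)
          (a : nat -> nat -> dsum A),
      (forall i, (i < r)%N -> (0 < dd i)%N) /\
      (\sum_(i < r) dd i)%N = d /\
      (forall i j, (i < r)%N -> (j < dd i)%N -> in_comp (S (gam i)) (a i j)) /\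
      Deltas [seq a i j | i <- iota 0 r, j <- iota 0 (dd i)] f <> (fun _ => 0))
  <-> ntilde_le (NFin d) (fdeg f).
Proof.
split.
  case=> r [gam [dd [a [_ [hsum [_ hne]]]]]].
  set s := [seq _ | i <- _, j <- _] in hne.
  have hsz : size s = d.
    rewrite size_allpairs_dep -hsum sumnE big_map.
    rewrite -(big_mkord xpredT dd) /index_iota subn0.
    by apply: eq_bigr => i _ /=; rewrite size_iota.
  rewrite /fdeg; case: pselect => [f0|fn0].
    by case: hne; rewrite f0 Deltas0.
  case: pselect => [ex|//].
  case: ex_minnP => m /asboolP km _ /=; rewrite leqNgt; apply/negP => lt.
  by apply: hne; apply: (killed_mono km lt).
move=> hd; apply: contrapT => hnot.
have fn0 : f <> (fun _ => 0).
  by move=> f0; move: hd; rewrite /fdeg; case: pselect.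
case: d hd hnot => [|d] hd hnot.
  apply: hnot; case: Gam_ne => g0.
  exists 0%N, (fun _ => g0), (fun _ => 0%N), (fun _ _ => 0).
  by split => //; split; [rewrite big_ord0|split].
have kd : killed d.+1 f.
  apply: (@replace _ _ (fun b => exists gm, in_comp (S gm) b)).
    exact: gen_dsum S_gen.
  move=> s hs hS; apply: contrapT => hne; apply: hnot.
  have [gam hgam] : exists gam : nat -> Gam, forall i, (i < d.+1)%N ->
      in_comp (S (gam i)) (nth 0 s i).
    suff H : forall i, exists gm, (i < d.+1)%N -> in_comp (S gm) (nth 0 s i).
      by case: (choice H) => gm hgm; exists gm.
    move=> i; case: (ltnP i d.+1) => hi.
      have hi' : (i < size s)%N by rewrite hs.
      have [gm hgm] := hS (nth 0 s i) (mem_nth 0 hi').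
      by exists gm.
    by case: Gam_ne => g0; exists g0.
  exists d.+1, gam, (fun _ => 1%N), (fun i _ => nth 0 s i).
  split => //; split.
    by rewrite sum_nat_const card_ord muln1.
  split; first by move=> i j hi _; apply: hgam.
  rewrite -hs /= (allpairs1r (fun i (_ : nat) => nth 0 s i) _ (fun _ => 0%N)) -/(mkseq _ _) mkseq_nth. exact: hne.
move: hd; rewrite /fdeg; case: pselect => [//|_].
case: pselect => [ex|nex _]; last by apply: nex; exists d; apply/asboolP.
case: ex_minnP => m _ hm /= lt.
have := hm d (introT (asboolP _) kd); by rewrite leqNgt lt.
Qed.
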